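(* Let $p>q$ be even positive integers and let $g_{i,j}\in\{1,-1\}$ for $i=1,\dots,q$ and $j=1,\dots,p-q$. Put $\eta_i'=\sigma_1^{g_{i,1}}\sigma_2^{g_{i,2}}\cdots\sigma_{p-q-1}^{g_{i,p-q-1}}$, $\eta_i=\eta_i'\,\sigma_{p-q}^{g_{i,p-q}}$, and \[\kappa_i=\sigma_{p-q+1}^{-1}\sigma_{p-q+2}^{-1}\cdots\sigma_{p-i}^{-1}\,\sigma_{p-i+1}\cdots\sigma_{p-1}\qquad(i=1,\dots,q),\] (so $\kappa_1=\sigma_{p-q+1}^{-1}\cdots\sigma_{p-1}^{-1}$ and $\kappa_q=\sigma_{p-q+1}\cdots\sigma_{p-1}$). Then \[\eta_1\kappa_1\eta_2\kappa_2\cdots\eta_q\kappa_q\ \sim_M\ \eta_1'\eta_2'\cdots\eta_q'.\]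
   Context: $\sigma_1,\sigma_2,\dots$ denote the standard Artin generators of the braid groups. Two braids (possibly with different numbers of strands) are Markov equivalent, written $\sim_M$, if their closures are isotopic links. *)

(* Defs.v *)
From Stdlib Require Import Arith List Relations.
Import ListNotations.

(* A letter (i, b) is the Artin generator sigma_i (1-based) if b = true,
   and its inverse sigma_i^{-1} if b = false. *)
Definition letter := (nat * bool)%type.
Definition word := list letter.

Definition letter_inv (l : letter) : letter := (fst l, negb (snd l)).

Definition wf_word (n : nat) (w : word) : Prop :=
  Forall (fun l => 1 <= fst l /\ fst l <= n - 1) w.

Inductive braid_rel (n : nat) : word -> word -> Prop :=
| br_cancel : forall i b, 1 <= i <= n - 1 ->
    braid_rel n [(i, b); (i, negb b)] []
| br_far : forall i j b c, 1 <= i <= n - 1 -> 1 <= j <= n - 1 ->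
    (i + 2 <= j \/ j + 2 <= i) ->
    braid_rel n [(i, b); (j, c)] [(j, c); (i, b)]
| br_braid : forall i, 1 <= i -> i + 1 <= n - 1 ->
    braid_rel n [(i, true); (i + 1, true); (i, true)]
                [(i + 1, true); (i, true); (i + 1, true)].

Inductive braid_step (n : nat) : word -> word -> Prop :=
| bs_ctx : forall a u v b, braid_rel n u v -> braid_step n (a ++ u ++ b) (a ++ v ++ b).

Definition braid_eq (n : nat) : word -> word -> Prop :=
  clos_refl_sym_trans word (braid_step n).

Definition braid := (nat * word)%type.

Inductive markov_step : braid -> braid -> Prop :=
| ms_eq : forall n w w', 1 <= n -> wf_word n w -> wf_word n w' ->
    braid_eq n w w' -> markov_step (n, w) (n, w')
| ms_conj : forall n w l, 1 <= n -> wf_word n w -> 1 <= fst l <= n - 1 ->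
    markov_step (n, w) (n, [l] ++ w ++ [letter_inv l])
| ms_stab : forall n w b, 1 <= n -> wf_word n w ->
    markov_step (n, w) (n + 1, w ++ [(n, b)]).

(* Markov equivalence: equivalence relation generated by the Markov moves
   (by Markov's theorem, equivalent to isotopy of the closures). *)
Definition markov_equiv : braid -> braid -> Prop :=
  clos_refl_sym_trans braid markov_step.

(* The braids of the statement; g i j = true encodes g_{i,j} = 1, false encodes -1. *)
Definition eta' (p q : nat) (g : nat -> nat -> bool) (i : nat) : word :=
  map (fun j => (j, g i j)) (seq 1 (p - q - 1)).

Definition eta (p q : nat) (g : nat -> nat -> bool) (i : nat) : word :=
  eta' p q g i ++ [(p - q, g i (p - q))].

Definition kappa (p q : nat) (i : nat) : word :=
  map (fun k => (k, false)) (seq (p - q + 1) (q - i)) ++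
  map (fun k => (k, true)) (seq (p - i + 1) (i - 1)).

Definition lhs_word (p q : nat) (g : nat -> nat -> bool) : word :=
  flat_map (fun i => eta p q g i ++ kappa p q i) (seq 1 q).

Definition rhs_word (p q : nat) (g : nat -> nat -> bool) : word :=
  flat_map (fun i => eta' p q g i) (seq 1 q).

(* Main.v *)
Require Import Defs.
From Stdlib Require Import Arith List Relations Lia.
Import ListNotations.

Definition pos a k : word := map (fun j => (j,true)) (seq a k).
Definition neg a k : word := map (fun j => (j,false)) (seq a k).
Definition winv (w : word) : word := rev (map letter_inv w).
Definition rng lo hi (w : word) := Forall (fun l => lo <= fst l <= hi) w.
Definition Aw m (g : nat -> nat -> bool) i : word := map (fun j => (j, g i j)) (seq 1 (m-1)).
Arguments pos : simpl never.
Arguments neg : simpl never.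
Arguments winv : simpl never.
Arguments eta : simpl never.
Arguments eta' : simpl never.
Arguments kappa : simpl never.
Arguments lhs_word : simpl never.
Arguments rhs_word : simpl never.
Arguments Aw : simpl never.

Notation beq := braid_eq.

Lemma pos_S a k : pos a (S k) = (a,true) :: pos (S a) k.
Proof. reflexivity. Qed.
Lemma pos_Sr a k : pos a (S k) = pos a k ++ [(a+k,true)].
Proof. unfold pos. rewrite seq_S, map_app. reflexivity. Qed.
Lemma neg_Sr a k : neg a (S k) = neg a k ++ [(a+k,false)].
Proof. unfold neg. rewrite seq_S, map_app. reflexivity. Qed.
Lemma pos_0 a : pos a 0 = []. Proof. reflexivity. Qed.
Lemma neg_0 a : neg a 0 = []. Proof. reflexivity. Qed.
Lemma winv_nil : winv [] = []. Proof. reflexivity. Qed.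
Lemma winv_cons l w : winv (l :: w) = winv w ++ [letter_inv l].
Proof. reflexivity. Qed.
Lemma winv_app u v : winv (u ++ v) = winv v ++ winv u.
Proof. unfold winv. rewrite map_app, rev_app_distr. reflexivity. Qed.

Lemma rng_app lo hi u v : rng lo hi u -> rng lo hi v -> rng lo hi (u ++ v).
Proof. intros; apply Forall_app; auto. Qed.
Lemma rng_nil lo hi : rng lo hi []. Proof. constructor. Qed.
Lemma rng_cons lo hi i b w : lo <= i -> i <= hi -> rng lo hi w -> rng lo hi ((i,b) :: w).
Proof. intros; constructor; simpl; auto. Qed.
Lemma rng_winv lo hi w : rng lo hi w -> rng lo hi (winv w).
Proof. unfold rng, winv; intros H. apply Forall_rev. apply Forall_map.
  eapply Forall_impl; [|exact H]. intros [i b]; simpl; auto. Qed.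
Lemma rng_mapseq lo hi (f : nat -> bool) a k : lo <= a -> a + k <= hi + 1 ->
  rng lo hi (map (fun j => (j, f j)) (seq a k)).
Proof. intros. unfold rng. apply Forall_map. apply Forall_forall. intros x Hx.
  apply in_seq in Hx. simpl. lia. Qed.
Lemma rng_pos lo hi a k : lo <= a -> a + k <= hi + 1 -> rng lo hi (pos a k).
Proof. intros; apply (rng_mapseq lo hi (fun _ => true)); auto. Qed.
Lemma rng_neg lo hi a k : lo <= a -> a + k <= hi + 1 -> rng lo hi (neg a k).
Proof. intros; apply (rng_mapseq lo hi (fun _ => false)); auto. Qed.
Lemma rng_Aw lo hi m g i : lo <= 1 -> m <= hi + 1 -> rng lo hi (Aw m g i).
Proof. intros; apply (rng_mapseq lo hi (g i)); lia. Qed.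
Lemma rng_mono lo hi lo' hi' w : lo' <= lo -> hi <= hi' -> rng lo hi w -> rng lo' hi' w.
Proof. unfold rng; intros ? ? H. eapply Forall_impl; [|exact H]. intros; simpl in *; lia. Qed.
Lemma wf_rng n w : rng 1 (n-1) w -> wf_word n w. Proof. auto. Qed.
Lemma rng_wf n w : wf_word n w -> rng 1 (n-1) w. Proof. auto. Qed.

Ltac rg := repeat first [ apply rng_app | apply rng_winv | apply rng_nil
   | apply rng_cons | apply rng_pos | apply rng_neg | apply rng_Aw ]; try lia.

Lemma beq_refl n w : beq n w w. Proof. apply rst_refl. Qed.
Lemma beq_sym n u v : beq n u v -> beq n v u. Proof. apply rst_sym. Qed.
Lemma beq_trans n u v w : beq n u v -> beq n v w -> beq n u w. Proof. apply rst_trans. Qed.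
Lemma beq_rel n u v : braid_rel n u v -> beq n u v.
Proof. intros H. apply rst_step. pose proof (bs_ctx n [] u v [] H) as H'.
  simpl in H'. rewrite !app_nil_r in H'. exact H'. Qed.
Lemma beq_ctx n a u v b : beq n u v -> beq n (a ++ u ++ b) (a ++ v ++ b).
Proof. induction 1.
  - apply rst_step. destruct H. rewrite !app_assoc. rewrite <- !(app_assoc (a ++ a0)).
    rewrite <- !(app_assoc _ _ b). constructor. auto.
  - apply beq_refl.
  - apply beq_sym; auto.
  - eapply beq_trans; eauto. Qed.
Lemma brew n L R a b u v : beq n u v -> L = a ++ u ++ b -> beq n (a ++ v ++ b) R -> beq n L R.
Proof. intros H -> H2. eapply beq_trans; [apply beq_ctx; exact H| exact H2]. Qed.

Ltac norm := repeat (rewrite <- app_assoc || rewrite app_nil_r || rewrite app_nil_l); simpl.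
Ltac neq := norm; norm; try reflexivity.
Ltac bw a b H := apply (brew _ _ _ a b _ _ H); [neq | ].
Ltac bend := norm; norm; apply beq_refl.

Lemma cancel_r n w : wf_word n w -> beq n (w ++ winv w) [].
Proof. induction w as [|[i c] w IH]; intros Hw.
  - apply beq_refl.
  - inversion Hw; subst. rewrite winv_cons.
    bw [(i,c)] [letter_inv (i,c)] (IH H2). simpl.
    apply beq_rel. apply br_cancel. simpl in H1. lia. Qed.
Lemma cancel_l n w : wf_word n w -> beq n (winv w ++ w) [].
Proof. induction w as [|[i c] w IH]; intros Hw.
  - apply beq_refl.
  - inversion Hw; subst. rewrite winv_cons. simpl.
    assert (H: beq n [(i, negb c); (i, c)] []).
    { pose proof (br_cancel n i (negb c)) as B. rewrite Bool.negb_involutive in B.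
      apply beq_rel, B. simpl in H1; lia. }
    bw (winv w) w H. simpl. apply IH; auto. Qed.

Lemma beq_winv n u v : wf_word n u -> wf_word n v -> beq n u v -> beq n (winv u) (winv v).
Proof. intros Hu Hv H.
  apply beq_trans with (winv u ++ v ++ winv v).
  { apply beq_sym. bw (winv u) (@nil letter) (cancel_r n v Hv). bend. }
  bw (winv u) (winv v) (beq_sym _ _ _ H).
  bw (@nil letter) (winv v) (cancel_l n u Hu). bend. Qed.

Lemma braid_S n i : 1 <= i -> S i <= n - 1 ->
  beq n [(i,true);(S i,true);(i,true)] [(S i,true);(i,true);(S i,true)].
Proof. intros. apply beq_rel. rewrite <- Nat.add_1_r. constructor; lia. Qed.

Lemma far_letter n i b v lo hi : 1 <= i <= n-1 -> rng lo hi v -> wf_word n v ->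
  (i + 2 <= lo \/ hi + 2 <= i) -> beq n ((i,b) :: v) (v ++ [(i,b)]).
Proof. induction v as [|[j c] v IH]; intros Hi Hr Hw Hf.
  - apply beq_refl.
  - inversion Hr; inversion Hw; subst. simpl in *.
    assert (H: beq n [(i,b);(j,c)] [(j,c);(i,b)]) by (apply beq_rel; constructor; lia).
    bw (@nil letter) v H. simpl.
    bw [(j,c)] (@nil letter) (IH Hi H2 H6 Hf). bend. Qed.

Lemma far_comm n u v lo1 hi1 lo2 hi2 : rng lo1 hi1 u -> rng lo2 hi2 v -> wf_word n u -> wf_word n v ->
  (hi1 + 2 <= lo2 \/ hi2 + 2 <= lo1) -> beq n (u ++ v) (v ++ u).
Proof. induction u as [|[i b] u IH]; intros Hr1 Hr2 Hw1 Hw2 Hf.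
  - simpl. rewrite app_nil_r. apply beq_refl.
  - inversion Hr1; inversion Hw1; subst. simpl in *.
    bw [(i,b)] (@nil letter) (IH H2 Hr2 H6 Hw2 Hf).
    assert (H: beq n ((i,b)::v) (v ++ [(i,b)])) by (apply (far_letter n i b v lo2 hi2); auto; simpl in *; lia).
    bw (@nil letter) u H. bend. Qed.

Lemma bI_t n j : 1 <= j -> S j <= n - 1 ->
  beq n [(S j,false);(j,true);(S j,true)] [(j,true);(S j,true);(j,false)].
Proof. intros.
  assert (C: beq n [(j,true);(j,false)] []) by (apply beq_rel; apply (br_cancel n j true); lia).
  assert (C2: beq n [(S j,false);(S j,true)] []) by (apply beq_rel; apply (br_cancel n (S j) false); lia).
  apply beq_trans with [(S j,false);(j,true);(S j,true);(j,true);(j,false)].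
  { apply beq_sym. bw [(S j,false);(j,true);(S j,true)] (@nil letter) C. bend. }
  bw [(S j,false)] [(j,false)] (braid_S n j H H0).
  bw (@nil letter) [(j,true);(S j,true);(j,false)] C2. bend. Qed.

Lemma bI n j e : 1 <= j -> S j <= n - 1 ->
  beq n [(S j,false);(j,e);(S j,true)] [(j,true);(S j,e);(j,false)].
Proof. intros. destruct e. apply bI_t; auto.
  assert (W1: wf_word n [(S j,false);(j,true);(S j,true)]) by (apply wf_rng; rg).
  assert (W2: wf_word n [(j,true);(S j,true);(j,false)]) by (apply wf_rng; rg).
  pose proof (beq_winv n _ _ W1 W2 (bI_t n j H H0)) as B.
  unfold winv in B. simpl in B. exact B. Qed.

Lemma L1 n k : forall a j, 1 <= a -> a + k <= n - 1 -> a <= j -> j < a + k ->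
  beq n (pos a (S k) ++ [(j,true)]) ((S j,true) :: pos a (S k)).
Proof. induction k as [|k IH]; intros a j Ha Hk Hj1 Hj2; [lia|].
  rewrite !(pos_S a), !(pos_S (S a)).
  destruct (Nat.eq_dec j a) as [->|Hne].
  - assert (F: beq n (pos (S (S a)) k ++ [(a,true)]) ([(a,true)] ++ pos (S (S a)) k)).
    { apply (far_comm n _ _ (S (S a)) (a+k+1) a a); rg; apply wf_rng; rg. }
    bw [(a,true);(S a,true)] (@nil letter) F.
    bw (@nil letter) (pos (S (S a)) k) (braid_S n a Ha ltac:(lia)). bend.
  - assert (H1 := IH (S a) j ltac:(lia) ltac:(lia) ltac:(lia) ltac:(lia)).
    rewrite pos_S in H1.
    bw [(a,true)] (@nil letter) H1.
    assert (F: beq n [(a,true);(S j,true)] [(S j,true);(a,true)]) by (apply beq_rel; constructor; lia).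
    bw (@nil letter) ((S a, true) :: pos (S (S a)) k) F. bend. Qed.

Lemma L2aux n a k : 1 <= a -> a + k <= n - 1 -> forall r, r <= k ->
  beq n (pos a (S k) ++ pos a r) (pos (S a) r ++ pos a (S k)).
Proof. intros Ha Hk. induction r as [|r IH]; intros Hr.
  - rewrite pos_0. bend.
  - rewrite (pos_Sr a r), (pos_Sr (S a) r). bw (@nil letter) [(a+r,true)] (IH ltac:(lia)).
    bw (pos (S a) r) (@nil letter) (L1 n k a (a+r) Ha Hk ltac:(lia) ltac:(lia)).
    replace (S a + r) with (S (a+r)) by lia. bend. Qed.

Lemma L2 n a k : 1 <= a -> a + k <= n - 1 ->
  beq n (pos a (S k) ++ pos a k) (pos (S a) k ++ pos a (S k)).
Proof. intros; apply L2aux; auto. Qed.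

Lemma L3g n m r k : 1 <= m -> m + 1 + r + k <= n - 1 ->
  beq n (neg (m+1) (S r) ++ pos (S (m+1+r)) k)
        (pos (S (m+1+r)) k ++ (neg (m+1) r ++ pos (m+1+r) k) ++ winv (pos (m+1+r) (S k))).
Proof. intros Hm Hb. set (a := m+1+r).
  assert (F: beq n (pos (S a) k ++ neg (m+1) r) (neg (m+1) r ++ pos (S a) k)).
  { apply (far_comm n _ _ (S a) (a+k) (m+1) (m+r)); try (apply wf_rng); rg; unfold a in *; lia. }
  assert (H: beq n (pos (S a) k ++ pos a k ++ winv (pos a (S k))) ((a,false) :: pos (S a) k)).
  { apply beq_sym.
    apply beq_trans with ((a,false) :: pos (S a) k ++ pos a (S k) ++ winv (pos a (S k))).
    { apply beq_sym. bw ((a,false) :: pos (S a) k) (@nil letter)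
        (cancel_r n (pos a (S k)) ltac:(apply wf_rng; rg)). bend. }
    bw [(a,false)] (winv (pos a (S k))) (beq_sym _ _ _ (L2 n a k ltac:(lia) ltac:(lia))).
    rewrite (pos_S a k).
    assert (C: beq n [(a,false);(a,true)] []) by (apply beq_rel; apply (br_cancel n a false); lia).
    bw (@nil letter) (pos (S a) k ++ pos a k ++ winv (pos a (S k))) C. bend. }
  apply beq_sym. bw (@nil letter) (pos a k ++ winv (pos a (S k))) F.
  bw (neg (m+1) r) (@nil letter) H.
  rewrite neg_Sr. replace (m+1+r) with a by (unfold a; lia). bend. Qed.

Lemma L5 n k : forall a e, 1 <= a -> a + k <= n - 1 ->
  beq n (winv (pos (S a) k) ++ (a,e) :: pos (S a) k) (pos a k ++ (a+k,e) :: winv (pos a k)).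
Proof. induction k as [|k IH]; intros a e Ha Hk.
  - rewrite !pos_0, Nat.add_0_r. bend.
  - rewrite !pos_S, !winv_cons. simpl.
    bw (winv (pos (S (S a)) k)) (pos (S (S a)) k) (bI n a e Ha ltac:(lia)).
    assert (F1: beq n (winv (pos (S (S a)) k) ++ [(a,true)]) ([(a,true)] ++ winv (pos (S (S a)) k))).
    { apply (far_comm n _ _ (S (S a)) (a+k+1) a a); try (apply wf_rng); rg. }
    bw (@nil letter) ((S a,e) :: (a,false) :: pos (S (S a)) k) F1.
    assert (F2: beq n ([(a,false)] ++ pos (S (S a)) k) (pos (S (S a)) k ++ [(a,false)])).
    { apply (far_comm n _ _ a a (S (S a)) (a+k+1)); try (apply wf_rng); rg. }
    bw ((a,true) :: winv (pos (S (S a)) k) ++ [(S a,e)]) (@nil letter) F2.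
    pose proof (IH (S a) e ltac:(lia) ltac:(lia)) as H.
    bw [(a,true)] [(a,false)] H.
    replace (S a + k) with (a + S k) by lia. bend. Qed.

Lemma brew_l n u v rest R : beq n u v -> beq n (v ++ rest) R -> beq n (u ++ rest) R.
Proof. intros H H2. eapply beq_trans; [|exact H2]. apply (beq_ctx n [] u v rest H). Qed.

Lemma kappa_eq p q i : kappa p q i = neg (p-q+1) (q-i) ++ pos (p-i+1) (i-1).
Proof. reflexivity. Qed.
Lemma eta_eq m p k g i : p - k = m -> eta p k g i = Aw m g i ++ [(m, g i m)].
Proof. intros H. unfold eta, eta', Aw. rewrite H. reflexivity. Qed.

Lemma L3 m q j : 1 <= m -> j < q ->
  beq (m + S q) (kappa (m + S q) (S q) (S j))
      (pos (m+q+1-j) j ++ kappa (m+q) q (S j) ++ winv (pos (m+q-j) (S j))).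
Proof. intros Hm Hj. rewrite !kappa_eq.
  pose proof (L3g (m + S q) m (q - S j) j Hm ltac:(lia)) as H.
  replace (m + S q - S q + 1) with (m+1) by lia.
  replace (S q - S j) with (S (q - S j)) by lia.
  replace (m + S q - S j + 1) with (S (m+1+(q - S j))) by lia.
  replace (S j - 1) with j by lia.
  replace (m+q-q+1) with (m+1) by lia.
  replace (m+q-S j+1) with (m+1+(q-S j)) by lia.
  replace (m+q+1-j) with (S (m+1+(q-S j))) by lia.
  replace (m+q-j) with (m+1+(q-S j)) by lia.
  exact H. Qed.

Lemma Tel m q g : 1 <= m -> forall t, t <= q ->
  beq (m + S q) (flat_map (fun i => eta (m+S q) (S q) g i ++ kappa (m+S q) (S q) i) (seq 1 t))
    (flat_map (fun i => eta (m+q) q g i ++ kappa (m+q) q i) (seq 1 t) ++ winv (pos (m+q+1-t) t)).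
Proof. intros Hm. induction t as [|t IH]; intros Ht.
  - simpl. rewrite pos_0, winv_nil. apply beq_refl.
  - rewrite seq_S, !flat_map_app. simpl.
    apply (brew_l _ _ _ _ _ (IH ltac:(lia))).
    rewrite (eta_eq m (m + S q) (S q)) by lia. rewrite (eta_eq m (m + q) q) by lia.
    set (F := flat_map (fun i => eta (m+q) q g i ++ kappa (m+q) q i) (seq 1 t)).
    set (A := Aw m g (S t)). set (Z := pos (m+q+1-t) t).
    bw (F ++ winv Z ++ A ++ [(m, g (S t) m)]) (@nil letter) (L3 m q t Hm ltac:(lia)).
    fold Z.
    assert (F1: beq (m + S q) (winv Z ++ (A ++ [(m, g (S t) m)])) ((A ++ [(m, g (S t) m)]) ++ winv Z)).
    { apply (far_comm _ _ _ (m+q+1-t) (m+q) 1 m); try apply wf_rng; unfold A, Z; rg. }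
    bw F (Z ++ kappa (m + q) q (S t) ++ winv (pos (m + q - t) (S t))) F1.
    bw (F ++ A ++ [(m, g (S t) m)]) (kappa (m + q) q (S t) ++ winv (pos (m + q - t) (S t)))
       (cancel_l (m + S q) Z ltac:(apply wf_rng; unfold Z; rg)).
    replace (m + q + 1 - S t) with (m+q-t) by lia. bend. Qed.

Lemma MB m q g : 1 <= m ->
  beq (m + S q) (lhs_word (m + S q) (S q) g)
    (lhs_word (m+q) q g ++ Aw m g (S q) ++ winv (pos (S m) q) ++ (m, g (S q) m) :: pos (S m) q).
Proof. intros Hm. unfold lhs_word. rewrite seq_S, flat_map_app. simpl.
  apply (brew_l _ _ _ _ _ (Tel m q g Hm q (le_n q))).
  rewrite (eta_eq m (m + S q) (S q)) by lia. rewrite kappa_eq.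
  replace (S q - S q) with 0 by lia. rewrite neg_0.
  replace (m + S q - S q + 1) with (S m) by lia. replace (m+q+1-q) with (S m) by lia.
  replace (S q - 1) with q by lia.
  set (F := flat_map (fun i => eta (m+q) q g i ++ kappa (m+q) q i) (seq 1 q)).
  assert (F1: beq (m + S q) (winv (pos (S m) q) ++ Aw m g (S q)) (Aw m g (S q) ++ winv (pos (S m) q))).
  { apply (far_comm _ _ _ (S m) (m+q) 1 (m-1)); try apply wf_rng; rg. }
  bw F ([(m, g (S q) m)] ++ pos (S m) q) F1. bend. Qed.

Lemma me_eq n w w' : 1 <= n -> wf_word n w -> wf_word n w' -> beq n w w' ->
  markov_equiv (n,w) (n,w').
Proof. intros; apply rst_step; constructor; auto. Qed.
Lemma me_trans a b c : markov_equiv a b -> markov_equiv b c -> markov_equiv a c.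
Proof. apply rst_trans. Qed.
Lemma me_conjw n u : forall w, 1 <= n -> wf_word n u -> wf_word n w ->
  markov_equiv (n,w) (n, u ++ w ++ winv u).
Proof. induction u as [|l u IH]; intros w Hn Hu Hw.
  - simpl. rewrite winv_nil, app_nil_r. apply rst_refl.
  - inversion Hu; subst. eapply me_trans; [apply (IH w Hn H2 Hw)|].
    rewrite winv_cons.
    replace ((l :: u) ++ w ++ winv u ++ [letter_inv l]) with ([l] ++ (u ++ w ++ winv u) ++ [letter_inv l]) by neq.
    apply rst_step. apply ms_conj; auto. apply wf_rng. apply rng_wf in H2. apply rng_wf in Hw. rg; auto. Qed.
Lemma me_rot n u v : 1 <= n -> wf_word n u -> wf_word n v -> markov_equiv (n, u ++ v) (n, v ++ u).
Proof. intros Hn Hu Hv. apply rng_wf in Hu, Hv.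
  eapply me_trans; [apply (me_conjw n v (u ++ v)); auto; apply wf_rng; rg; auto|].
  apply me_eq; auto; try (apply wf_rng; rg; auto).
  bw (v ++ u) (@nil letter) (cancel_r n v (wf_rng _ _ Hv)). bend. Qed.
Lemma me_destab n w b : 1 <= n -> wf_word n w -> markov_equiv (n + 1, w ++ [(n,b)]) (n, w).
Proof. intros. apply rst_sym, rst_step. constructor; auto. Qed.

Lemma rng_lhs m q g : 1 <= m -> rng 1 (m+q-1) (lhs_word (m+q) q g).
Proof. intros Hm. unfold lhs_word.
  assert (G: forall l, (forall i, In i l -> 1 <= i <= q) ->
     rng 1 (m+q-1) (flat_map (fun i => eta (m+q) q g i ++ kappa (m+q) q i) l)).
  { induction l as [|i l IH]; intros Hl; simpl. apply rng_nil.
    assert (Hi := Hl i (or_introl eq_refl)).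
    apply rng_app; [|apply IH; intros; apply Hl; right; auto].
    rewrite (eta_eq m) by lia. rewrite kappa_eq. rg. }
  apply G. intros i Hi. apply in_seq in Hi. lia. Qed.

Lemma rhs_S m q g : rhs_word (m + S q) (S q) g = rhs_word (m+q) q g ++ Aw m g (S q).
Proof. unfold rhs_word. rewrite seq_S, flat_map_app. simpl. unfold eta', Aw.
  replace (m + S q - S q) with m by lia. replace (m + q - q) with m by lia.
  rewrite app_nil_r. reflexivity. Qed.

Lemma Claim m g : 1 <= m -> forall q W, rng 1 (m-1) W ->
  markov_equiv (m+q, lhs_word (m+q) q g ++ W) (m, rhs_word (m+q) q g ++ W).
Proof. intros Hm. induction q as [|q IH]; intros W HW.
  - rewrite Nat.add_0_r. unfold lhs_word, rhs_word. simpl. apply rst_refl.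
  - rewrite rhs_S.
    set (U := lhs_word (m+q) q g ++ Aw m g (S q)).
    set (C := pos m q). set (e := g (S q) m).
    assert (HU: rng 1 (m+q-1) U).
    { unfold U. apply rng_app. apply rng_lhs; auto. rg. }
    assert (HC: rng 1 (m+q-1) C) by (unfold C; rg).
    assert (HW': rng 1 (m+q-1) W) by (eapply rng_mono; [| |exact HW]; lia).
    pose proof (rng_lhs m (S q) g Hm) as HL.
    assert (M: forall w, rng 1 (m+q-1) w -> rng 1 (m + S q - 1) w)
      by (intros; eapply rng_mono; [| |eassumption]; lia).
    eapply me_trans.
    { apply (me_eq _ _ (U ++ C ++ (m+q,e) :: winv C ++ W)); try lia.
      - apply wf_rng. apply rng_app; auto.
      - apply wf_rng. apply rng_app; [apply M; exact HU|]. apply rng_app; [apply M; exact HC|].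
        apply rng_cons; try lia. apply rng_app; [apply M, rng_winv, HC | apply M, HW'].
      - apply (brew_l _ _ _ _ _ (MB m q g Hm)).
        bw (lhs_word (m+q) q g ++ Aw m g (S q)) W (L5 (m + S q) q m e Hm ltac:(lia)).
        unfold U, C. bend. }
    replace (U ++ C ++ (m+q,e) :: winv C ++ W) with ((U ++ C ++ [(m+q,e)]) ++ (winv C ++ W)) by neq.
    eapply me_trans.
    { apply me_rot; try lia; apply wf_rng.
      - apply rng_app; [apply M; exact HU|]. apply rng_app; [apply M; exact HC|].
        apply rng_cons; try lia. apply rng_nil.
      - apply rng_app; [apply M, rng_winv, HC | apply M, HW']. }
    replace ((winv C ++ W) ++ U ++ C ++ [(m+q,e)]) with ((winv C ++ W ++ U ++ C) ++ [(m+q,e)]) by neq.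
    replace (m + S q) with (m + q + 1) by lia.
    eapply me_trans.
    { apply me_destab; try lia. apply wf_rng. apply rng_app; [apply rng_winv, HC|].
      apply rng_app; [exact HW'|]. apply rng_app; [exact HU| exact HC]. }
    replace (winv C ++ W ++ U ++ C) with ((winv C ++ W ++ U) ++ C) by neq.
    eapply me_trans.
    { apply me_rot; try lia; apply wf_rng; auto. apply rng_app; [apply rng_winv, HC|].
      apply rng_app; [exact HW'| exact HU]. }
    eapply me_trans.
    { apply (me_eq _ _ (W ++ U)); try lia.
      - apply wf_rng. apply rng_app; [exact HC|]. apply rng_app; [apply rng_winv, HC|].
        apply rng_app; [exact HW'| exact HU].
      - apply wf_rng. apply rng_app; [exact HW'| exact HU].
      - bw (@nil letter) (W ++ U) (cancel_r _ C (wf_rng _ _ HC)). bend. }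
    eapply me_trans.
    { apply me_rot; try lia; apply wf_rng; auto. }
    unfold U. rewrite <- app_assoc.
    replace (rhs_word (m + q) q g ++ Aw m g (S q) ++ W) with (rhs_word (m + q) q g ++ Aw m g (S q) ++ W) by reflexivity.
    rewrite <- app_assoc. apply IH. apply rng_app; auto. rg. Qed.

Theorem lemma3p2 (p q : nat) (g : nat -> nat -> bool) :
  0 < q -> q < p -> Nat.Even p -> Nat.Even q ->
  markov_equiv (p, lhs_word p q g) (p - q, rhs_word p q g).
Proof. intros Hq Hpq _ _.
  assert (Hp: p = (p - q) + q) by lia.
  remember (p - q) as m. rewrite Hp.
  pose proof (Claim m g ltac:(lia) q [] (rng_nil _ _)) as H.
  rewrite !app_nil_r in H. exact H. Qed.
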